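(* Let $0<\alpha\le 1$ and let $G$ be the differential (Helmholtz) filter on $L^2(\Omega)^d$ with filter radius $\delta>0$. Then the operators $D_\alpha=[(1-\alpha)G+\alpha I]^{-1}$, $D_\alpha G$ and $I-D_\alpha G$ are bounded linear operators on $L^2(\Omega)^d$, and $$\|D_\alpha\|\le\frac{1}{\alpha},\qquad \|D_\alpha G\|\le 1,\qquad \|I-D_\alpha G\|\le 1,$$ where $\|\cdot\|$ denotes the operator norm induced by the $L^2(\Omega)^d$ norm.
   Context: Let $\Omega\subset\mathbb{R}^n$ be a regular, bounded, polyhedral domain, $d\ge1$, and let $\|\cdot\|$, $(\cdot,\cdot)$ denote the $L^2(\Omega)^d$ norm and inner product. Let $X=H^1_0(\Omega)^d$. Fix $\delta>0$. The differential filter $G:L^2(\Omega)^d\to X$ is defined by $Gu=\bar u$, where $\bar u\in X$ is the unique solution of $\delta^2(\nabla\bar u,\nabla v)+(\bar u,v)=(u,v)$ for all $v\in X$ (the weak form of $-\delta^2\Delta\bar u+\bar u=u$ in $\Omega$, $\bar u=0$ on $\partial\Omega$). Regarded as an operator on $L^2(\Omega)^d$, $G$ is bounded, self-adjoint, injective and satisfies $0\le (Gv,v)\le \|v\|^2$. *)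

(* Defs.v *)
From HB Require Import structures.
From mathcomp Require Import all_boot all_order all_algebra.
From mathcomp Require Import reals.
Set Implicit Arguments. Unset Strict Implicit. Unset Printing Implicit Defensive.
Import Order.TTheory GRing.Theory Num.Theory.
Local Open Scope ring_scope.

Section Hilbert.
Variables (R : realType) (V : lmodType R).

Definition is_inner_product (ip : V -> V -> R) : Prop :=
  [/\ forall (a : R) (u v w : V), ip (a *: u + v) w = a * ip u w + ip v w,
      forall u v : V, ip u v = ip v u,
      forall v : V, 0 <= ip v v
    & forall v : V, ip v v = 0 -> v = 0].

Definition hnorm (ip : V -> V -> R) (v : V) : R := Num.sqrt (ip v v).

Definition ip_complete (ip : V -> V -> R) : Prop :=
  forall u : nat -> V,
    (forall e : R, 0 < e -> exists N : nat, forall m n : nat,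
        (N <= m)%N -> (N <= n)%N -> hnorm ip (u m - u n) < e) ->
    exists l : V, forall e : R, 0 < e -> exists N : nat, forall n : nat,
        (N <= n)%N -> hnorm ip (u n - l) < e.

Definition is_linear_op (T : V -> V) : Prop :=
  forall (a : R) (u v : V), T (a *: u + v) = a *: T u + T v.

Definition bounded_linear_op (ip : V -> V -> R) (T : V -> V) : Prop :=
  is_linear_op T /\ exists C : R, forall v : V, hnorm ip (T v) <= C * hnorm ip v.

(* ||T|| <= c for the induced operator norm ||T|| = sup_{v <> 0} ||Tv||/||v||,
   written out: ||T v|| <= c ||v|| for all v. *)
Definition opnorm_le (ip : V -> V -> R) (T : V -> V) (c : R) : Prop :=
  forall v : V, hnorm ip (T v) <= c * hnorm ip v.

Definition self_adjoint (ip : V -> V -> R) (T : V -> V) : Prop :=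
  forall u v : V, ip (T u) v = ip u (T v).

End Hilbert.

(* Main.v *)
Require Import Defs.
From HB Require Import structures.
From mathcomp Require Import all_boot all_order all_algebra.
From mathcomp Require Import reals.
From mathcomp Require Import ring lra.
From Stdlib Require Import ClassicalEpsilon.
Set Implicit Arguments. Unset Strict Implicit.
Import Order.TTheory GRing.Theory Num.Theory.
Local Open Scope ring_scope.

Section Form.
Variables (R : realType) (V : lmodType R) (b : V -> V -> R).
Hypothesis Hl : forall (a : R) (u v w : V), b (a *: u + v) w = a * b u w + b v w.
Hypothesis Hs : forall u v : V, b u v = b v u.

Lemma b0l w : b 0 w = 0.
Proof. have := Hl 1 0 0 w; rewrite scale1r addr0 mul1r; lra. Qed.
Lemma bZl a x w : b (a *: x) w = a * b x w.
Proof. by have := Hl a x 0 w; rewrite addr0 b0l addr0. Qed.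
Lemma bDl x y w : b (x + y) w = b x w + b y w.
Proof. by have := Hl 1 x y w; rewrite scale1r mul1r. Qed.
Lemma bDr x y w : b w (x + y) = b w x + b w y.
Proof. by rewrite Hs bDl !(Hs w). Qed.
Lemma bZr a x w : b w (a *: x) = a * b w x.
Proof. by rewrite Hs bZl (Hs w). Qed.
Lemma bexp a c x y : b (a *: x + c *: y) (a *: x + c *: y) =
  a ^+ 2 * b x x + 2 * a * c * b x y + c ^+ 2 * b y y.
Proof. rewrite !(bDl, bZl, bDr, bZr) (Hs y x). ring. Qed.

Hypothesis Hp : forall v, 0 <= b v v.
Lemma bCS x y : b x y ^+ 2 <= b x x * b y y.
Proof.
have h1 := Hp (b y y *: x + (- b x y) *: y); rewrite bexp in h1.
have h2 := Hp ((- b x y) *: x + b x x *: y); rewrite bexp in h2.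
have h3 := Hp (1 *: x + (- b x y) *: y); rewrite bexp in h3.
have hx := Hp x; have hy := Hp y.
have [Y0|Yp] := eqVneq (b y y) 0.
  have [X0|Xp] := eqVneq (b x x) 0. rewrite X0 Y0 in h3 *; nra.
  have Xq : 0 < b x x by rewrite lt_def Xp hx.
  rewrite Y0 in h2 *; nra.
have Yq : 0 < b y y by rewrite lt_def Yp hy.
nra.
Qed.
End Form.

Section Lin.
Variables (R : realType) (V : lmodType R) (T : V -> V).
Hypothesis HT : is_linear_op T.
Lemma lin0 : T 0 = 0.
Proof. have h := HT 1 0 0; rewrite !scale1r addr0 in h.
by apply: (@addrI _ (T 0)); rewrite addr0 -h. Qed.
Lemma linZ a x : T (a *: x) = a *: T x.
Proof. by have := HT a x 0; rewrite addr0 lin0 addr0. Qed.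
Lemma linD x y : T (x + y) = T x + T y.
Proof. by have := HT 1 x y; rewrite !scale1r. Qed.
Lemma linN x : T (- x) = - T x.
Proof. by rewrite -scaleN1r linZ scaleN1r. Qed.
Lemma linB x y : T (x - y) = T x - T y.
Proof. by rewrite linD linN. Qed.
End Lin.

Lemma sq_le (R : realType) (k a c : R) : 0 <= k -> 0 <= c -> a <= k ^+ 2 * c ->
  Num.sqrt a <= k * Num.sqrt c.
Proof.
move=> hk hc hac; apply: (le_trans (ler_wsqrtr hac)).
by rewrite sqrtrM ?sqrtr_sqr ?ger0_norm // sqr_ge0.
Qed.

Lemma sq_le' (R : realType) (a c : R) : 0 <= c -> a <= c ^+ 2 -> Num.sqrt a <= c.
Proof.
move=> hc hac; apply: (le_trans (ler_wsqrtr hac)).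
by rewrite sqrtr_sqr ger0_norm.
Qed.

Lemma pow_small (R : realType) (q e : R) : 0 <= q < 1 -> 0 < e ->
  exists N : nat, q ^+ N < e.
Proof.
case/andP=> q0 q1 e0.
have [->|qn0] := eqVneq q 0; first by exists 1%N; rewrite expr1.
have qp : 0 < q by rewrite lt_def qn0 q0.
set h := q^-1 - 1.
have qh : q * (1 + h) = 1 by rewrite /h addrC subrK mulfV.
have hp : 0 < h.
  clearbody h; nra.
have bern : forall n : nat, 1 + n%:R * h <= (1 + h) ^+ n.
  elim=> [|n IH]; first by rewrite mul0r addr0 expr0.
  rewrite exprS -[n.+1]addn1 natrD.
  have : 1 <= (1 + h) ^+ n by apply: exprn_ege1; lra.
  nra.
set N := Num.Def.archi_bound ((e * h)^-1).
have eh : 0 < e * h by apply: mulr_gt0.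
have hN : (e * h)^-1 < N%:R by apply: archi_boundP; rewrite invr_ge0 ltW.
have h1 : (e * h)^-1 * (e * h) = 1 by rewrite mulVf // gt_eqF.
exists N.
have qN : q ^+ N * (1 + h) ^+ N = 1 by rewrite -exprMn qh expr1n.
have b := bern N.
have Neh : 1 < N%:R * (e * h) by nra.
have Q0 : 0 <= q ^+ N by apply: exprn_ge0.
have eP : 1 < e * (1 + h) ^+ N by nra.
have P0 : 0 < (1 + h) ^+ N by apply: exprn_gt0; lra.
nra.
Qed.

Lemma t1 (R : realType) (V : lmodType R) (l a b : V) : l - a + b - l = b - a.
Proof. by rewrite addrAC [l - a - l]addrAC subrr add0r addrC. Qed.
Lemma t2 (R : realType) (V : lmodType R) (al : R) (g w : V) : (1 - al) *: g + al *: w - g = (- al) *: g + al *: w.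
Proof. by rewrite scalerBl scale1r addrAC [g - _ - g]addrAC subrr add0r scaleNr. Qed.
Lemma t3 (R : realType) (V : lmodType R) (x y c l : V) : x + c - l = (x - y) + (y + c - l).
Proof. by rewrite addrA [_ + (y + c)]addrA subrK. Qed.

Section Main.
Variables (R : realType) (V : lmodType R) (ip : V -> V -> R) (G : V -> V) (al : R).
Hypothesis Hip : is_inner_product ip.
Hypothesis HGl : is_linear_op G.
Hypothesis HGsa : self_adjoint ip G.
Hypothesis HGpos : forall v : V, 0 <= ip (G v) v /\ ip (G v) v <= hnorm ip v ^+ 2.
Hypothesis Hal : 0 < al <= 1.
Hypothesis Hcomplete : ip_complete ip.

Let Hl : forall (a : R) (u v w : V), ip (a *: u + v) w = a * ip u w + ip v w.
Proof. by case: Hip. Qed.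
Let Hs : forall u v : V, ip u v = ip v u.
Proof. by case: Hip. Qed.
Let Hp : forall v : V, 0 <= ip v v.
Proof. by case: Hip. Qed.
Let Hd : forall v : V, ip v v = 0 -> v = 0.
Proof. by case: Hip. Qed.

Let hn2 v : hnorm ip v ^+ 2 = ip v v.
Proof. exact: sqr_sqrtr. Qed.
Let hn_ge0 v : 0 <= hnorm ip v.
Proof. exact: sqrtr_ge0. Qed.

Let hnormZ a x : hnorm ip (a *: x) = `|a| * hnorm ip x.
Proof.
rewrite /hnorm (bZl Hl) (bZr Hl Hs) mulrA -expr2 sqrtrM ?sqr_ge0 //.
by rewrite sqrtr_sqr.
Qed.
Let hnormN x : hnorm ip (- x) = hnorm ip x.
Proof. by rewrite -scaleN1r hnormZ normrN normr1 mul1r. Qed.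
Let hnormBC x y : hnorm ip (x - y) = hnorm ip (y - x).
Proof. by rewrite -opprB hnormN. Qed.

Let hnormD x y : hnorm ip (x + y) <= hnorm ip x + hnorm ip y.
Proof.
rewrite /hnorm.
have cs := bCS Hl Hs Hp x y.
have sx := sqr_sqrtr (Hp x); have sy := sqr_sqrtr (Hp y).
have gx := sqrtr_ge0 (ip x x); have gy := sqrtr_ge0 (ip y y).
have -> : x + y = 1 *: x + 1 *: y by rewrite !scale1r.
rewrite (bexp Hl Hs).
apply: sq_le' => //; first by apply: addr_ge0.
set X := ip x x in cs sx gx *; set Y := ip y y in cs sy gy *.
set Z := ip x y in cs *.
set a := Num.sqrt X in sx gx *; set b := Num.sqrt Y in sy gy *.
have Zab : Z <= a * b.
  have ab : 0 <= a * b by apply: mulr_ge0.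
  have h : Z ^+ 2 <= (a * b) ^+ 2 by rewrite exprMn sx sy.
  nra.
nra.
Qed.

Let hnorm_eq0 x : hnorm ip x = 0 -> x = 0.
Proof.
move=> /eqP; rewrite sqrtr_eq0 => h; apply: Hd.
by apply/eqP; rewrite eq_le h Hp.
Qed.

Let hnorm_small x : (forall e, 0 < e -> hnorm ip x < e) -> x = 0.
Proof.
move=> H; apply: hnorm_eq0.
have [h0|hp] := eqVneq (hnorm ip x) 0 => //.
have : 0 < hnorm ip x by rewrite lt_def hp hn_ge0.
by move=> /H; rewrite ltxx.
Qed.

Let bG x y := ip (G x) y.
Let bGl : forall (a : R) (u v w : V), bG (a *: u + v) w = a * bG u w + bG v w.
Proof. by move=> a u v w; rewrite /bG HGl Hl. Qed.
Let bGs : forall u v : V, bG u v = bG v u.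
Proof. by move=> u v; rewrite /bG HGsa Hs. Qed.
Let bGp : forall v : V, 0 <= bG v v.
Proof. by move=> v; case: (HGpos v). Qed.

Let GGle x : ip (G x) (G x) <= ip (G x) x.
Proof.
have cs := bCS bGl bGs bGp x (G x).
rewrite /bG in cs.
have h1 : ip (G (G x)) (G x) <= ip (G x) (G x) by rewrite -hn2; case: (HGpos (G x)).
have h2 : 0 <= ip (G (G x)) (G x) by case: (HGpos (G x)).
have h3 : 0 <= ip (G x) x by case: (HGpos x).
have h4 := Hp (G x).
nra.
Qed.
Let GPle x : ip (G x) x <= ip x x.
Proof. by rewrite -hn2; case: (HGpos x). Qed.
Let GP0 x : 0 <= ip (G x) x.
Proof. by case: (HGpos x). Qed.

Definition Aop (v : V) := (1 - al) *: G v + al *: v.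

Let Alin : is_linear_op Aop.
Proof.
move=> a u v; rewrite /Aop HGl !scalerDr !scalerA (mulrC (1 - al)) (mulrC al).
by rewrite -!scalerA addrACA.
Qed.

Let AA x : ip (Aop x) (Aop x) =
  (1 - al) ^+ 2 * ip (G x) (G x) + 2 * (1 - al) * al * ip (G x) x + al ^+ 2 * ip x x.
Proof. by rewrite /Aop (bexp Hl Hs). Qed.

Let Ax x : ip (Aop x) x = (1 - al) * ip (G x) x + al * ip x x.
Proof. by rewrite /Aop (bDl Hl) !(bZl Hl). Qed.

Let AGcomm x : G (Aop x) = Aop (G x).
Proof. by rewrite /Aop (linD HGl) !(linZ HGl). Qed.

Let A_le x : ip (Aop x) (Aop x) <= ip x x.
Proof.
rewrite AA; have h1 := GGle x; have h2 := GPle x; have h3 := Hp (G x); have h4 := GP0 x.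
case/andP: Hal => a0 a1.
have p1 : (1 - al) ^+ 2 * ip (G x) (G x) <= (1 - al) ^+ 2 * ip x x.
  by apply: ler_wpM2l; [apply: sqr_ge0 | lra].
have p2 : (1 - al) * al * ip (G x) x <= (1 - al) * al * ip x x.
  by apply: ler_wpM2l => //; apply: mulr_ge0; lra.
nra.
Qed.

Let A_ge x : al ^+ 2 * ip x x <= ip (Aop x) (Aop x).
Proof.
rewrite AA; have h1 := GGle x; have h2 := GPle x; have h3 := Hp (G x); have h4 := GP0 x.
case/andP: Hal => a0 a1.
have p1 : 0 <= (1 - al) ^+ 2 * ip (G x) (G x) by apply: mulr_ge0 => //; apply: sqr_ge0.
have p2 : 0 <= (1 - al) * al * ip (G x) x by apply: mulr_ge0 => //; apply: mulr_ge0; lra.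
nra.
Qed.

Let Ainj : injective Aop.
Proof.
move=> x y hxy; apply/subr0_eq; apply: Hd.
have := A_ge (x - y); rewrite (linB Alin) hxy subrr.
rewrite (b0l Hl) => h; apply/eqP; rewrite eq_le Hp andbT.
case/andP: Hal => a0 a1.
have a2 : 0 < al ^+ 2 by apply: exprn_gt0.
nra.
Qed.

Definition Kop (v : V) := v - al *: Aop v.

Let Klin : is_linear_op Kop.
Proof.
move=> a u v; rewrite /Kop Alin scalerDr scalerA mulrC -scalerA scalerBr.
by rewrite opprD addrACA.
Qed.

Let K_le x : ip (Kop x) (Kop x) <= (1 - al ^+ 2) * ip x x.
Proof.
rewrite /Kop -[x in x - _]scale1r -scaleNr (bexp Hl Hs) (Hs x) Ax.
have h1 := A_le x; have h2 := Hp x; have h3 := GP0 x.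
case/andP: Hal => a0 a1.
have p : 0 <= al * (1 - al) * ip (G x) x by apply: mulr_ge0 => //; apply: mulr_ge0; lra.
have p' : al ^+ 2 * ip (Aop x) (Aop x) <= al ^+ 2 * ip x x.
  by apply: ler_wpM2l => //; apply: sqr_ge0.
nra.
Qed.

Let q := Num.sqrt (1 - al ^+ 2).
Let q0 : 0 <= q. Proof. exact: sqrtr_ge0. Qed.
Let q1 : q < 1.
Proof.
rewrite /q -{2}sqrtr1 ltr_sqrt //; case/andP: Hal => a0 a1; nra.
Qed.

Let hK x : hnorm ip (Kop x) <= q * hnorm ip x.
Proof.
apply: sq_le => //; rewrite sqr_sqrtr; first exact: K_le.
case/andP: Hal => a0 a1; nra.
Qed.

Let hKn n x : hnorm ip (iter n Kop x) <= q ^+ n * hnorm ip x.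
Proof.
elim: n => [|n IH]; first by rewrite expr0 mul1r.
rewrite iterS exprS -mulrA; apply: (le_trans (hK _)).
by apply: ler_wpM2l.
Qed.

Let Asurj f : exists l, Aop l = f.
Proof.
pose F x := Kop x + al *: f.
pose u n := iter n F 0.
have ushift : forall n j, u (n + j)%N - u n = iter n Kop (u j).
  elim=> [|n IH] j; first by rewrite /= subr0.
  rewrite addSn /u !iterS -/(u (n + j)%N) -/(u n) /F [Kop (u n) + _]addrC addrKA.
  by rewrite -(linB Klin) IH.
set B := al * hnorm ip f / (1 - q).
have Bq : B * (1 - q) = al * hnorm ip f.
  by rewrite /B mulfVK // subr_eq0 eq_sym lt_eqF.
have B0 : 0 <= B.
  rewrite /B; apply: divr_ge0; last by rewrite subr_ge0 ltW.
  by apply: mulr_ge0 => //; case/andP: Hal => /ltW.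
have ubd : forall j, hnorm ip (u j) <= B.
  elim=> [|j IH].
    by rewrite /u /= /hnorm (b0l Hl) sqrtr0.
  rewrite /u iterS -/(u j) /F; apply: (le_trans (hnormD _ _)).
  rewrite hnormZ ger0_norm; last by case/andP: Hal => /ltW.
  have h1 := hK (u j).
  have p : q * hnorm ip (u j) <= q * B by apply: ler_wpM2l.
  lra.
have cauchy : forall e : R, 0 < e -> exists N : nat, forall m n : nat,
        (N <= m)%N -> (N <= n)%N -> hnorm ip (u m - u n) < e.
  move=> e e0.
  have [N hN] : exists N : nat, q ^+ N < e / (B + 1).
    apply: pow_small; first by rewrite q0 q1.
    by apply: divr_gt0 => //; lra.
  have hN' : q ^+ N * B < e.
    rewrite ltr_pdivlMr in hN; last by lra.
    have := exprn_ge0 N q0; nra.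
  have key : forall m n, (N <= n)%N -> (n <= m)%N -> hnorm ip (u m - u n) < e.
    move=> m n Nn nm.
    rewrite -(subnKC nm) ushift; apply: (le_lt_trans (hKn _ _)).
    apply: (le_lt_trans _ hN').
    have qnN : q ^+ n <= q ^+ N by apply: ler_wiXn2l => //; apply: ltW.
    have := ubd (m - n)%N; have := exprn_ge0 n q0; have := hn_ge0 (u (m - n)%N).
    nra.
  exists N => m n Nm Nn.
  have [nm|mn] := leqP n m; first exact: key.
  by rewrite hnormBC; apply: key => //; apply: ltnW.
have [l hl] := Hcomplete cauchy.
exists l.
have fx : Kop l + al *: f - l = 0.
  apply: hnorm_small => e e0.
  have [N hN] := hl (e / 2) (ltac:(by apply: divr_gt0)).
  have e1 := hN N (leqnn N); have e2 := hN N.+1 (leqnSn N).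
  have -> : Kop l + al *: f - l = Kop (l - u N) + (u N.+1 - l).
    by rewrite (linB Klin) /u iterS -/(u N) /F -t3.
  apply: (le_lt_trans (hnormD _ _)).
  have h1 := hK (l - u N); rewrite [hnorm ip (l - u N)]hnormBC in h1.
  have p : q * hnorm ip (u N - l) <= 1 * hnorm ip (u N - l).
    by apply: ler_wpM2r => //; apply: ltW.
  lra.
move: fx; rewrite /Kop t1 -scalerBr => /eqP.
rewrite scaler_eq0 => /orP[|/eqP h]; first by case/andP: Hal => /lt0r_neq0 /negPf ->.
by apply/esym/subr0_eq.
Qed.

Lemma core : exists D : V -> V,
    [/\ cancel (fun v => (1 - al) *: G v + al *: v) D,
         cancel D (fun v => (1 - al) *: G v + al *: v),
         bounded_linear_op ip D,
         bounded_linear_op ip (fun v => D (G v))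
       & bounded_linear_op ip (fun v => v - D (G v))] /\
    [/\ opnorm_le ip D al^-1,
         opnorm_le ip (fun v => D (G v)) 1
       & opnorm_le ip (fun v => v - D (G v)) 1].
Proof.
have [D hD] : exists D : V -> V, forall f, Aop (D f) = f.
  exists (fun f => proj1_sig (constructive_indefinite_description _ (Asurj f))).
  by move=> f; exact: (proj2_sig (constructive_indefinite_description _ (Asurj f))).
have c1 : cancel Aop D by move=> v; apply: Ainj; rewrite hD.
have Dlin : is_linear_op D by move=> a u v; apply: Ainj; rewrite Alin !hD.
have DG : forall v, D (G v) = G (D v).
  by move=> v; apply: Ainj; rewrite hD -AGcomm hD.
case/andP: Hal => a0 a1.
have bD : opnorm_le ip D al^-1.
  move=> v; have := hD v; set w := D v; move=> <-.
  rewrite /hnorm; apply: sq_le => //; first by rewrite invr_ge0 ltW.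
  have a2 : al ^+ 2 != 0 by rewrite expf_neq0 // lt0r_neq0.
  rewrite -[ip w w](mulKf a2) exprVn; apply: ler_wpM2l; last exact: A_ge.
  by rewrite invr_ge0 ltW // exprn_gt0.
have bDG : opnorm_le ip (fun v => D (G v)) 1.
  move=> v /=; rewrite DG; have := hD v; set w := D v; move=> <-.
  rewrite /hnorm; apply: sq_le => //; rewrite expr1n mul1r AA.
  have h1 := GGle w; have h2 := GPle w; have h3 := Hp (G w); have h4 := GP0 w.
  have p1 : (1 - al) * al * ip (G w) (G w) <= (1 - al) * al * ip (G w) w.
    by apply: ler_wpM2l => //; apply: mulr_ge0; lra.
  have p2 : al ^+ 2 * ip (G w) (G w) <= al ^+ 2 * ip w w.
    by apply: ler_wpM2l; [apply: sqr_ge0 | lra].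
  nra.
have bIDG : opnorm_le ip (fun v => v - D (G v)) 1.
  move=> v /=; rewrite DG; have := hD v; set w := D v; move=> <-.
  rewrite /hnorm; apply: sq_le => //; rewrite expr1n mul1r {1 2}/Aop t2.
  rewrite (bexp Hl Hs) -/(Aop w) AA.
  have h1 := GGle w; have h2 := GPle w; have h3 := Hp (G w); have h4 := GP0 w.
  have p1 : al * ip (G w) (G w) <= al * ip (G w) w by apply: ler_wpM2l => //; lra.
  nra.
exists D; split; split => //.
- by split => //; exists al^-1.
- split; last by exists 1.
  by move=> a u v /=; rewrite HGl Dlin.
- split; last by exists 1.
  by move=> a u v /=; rewrite HGl Dlin scalerBr opprD addrACA.
Qed.
End Main.

Theorem mainTheorem2 (R : realType) (V : lmodType R) (ip : V -> V -> R)
  (Hip : is_inner_product ip) (Hcomplete : ip_complete ip)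
  (G : V -> V)
  (HGbdd : bounded_linear_op ip G)
  (HGsa : self_adjoint ip G)
  (HGinj : injective G)
  (HGpos : forall v : V, 0 <= ip (G v) v /\ ip (G v) v <= hnorm ip v ^+ 2)
  (alpha : R) (Halpha : 0 < alpha <= 1) :
  exists D : V -> V,
    [/\ cancel (fun v => (1 - alpha) *: G v + alpha *: v) D,
         cancel D (fun v => (1 - alpha) *: G v + alpha *: v),
         bounded_linear_op ip D,
         bounded_linear_op ip (fun v => D (G v))
       & bounded_linear_op ip (fun v => v - D (G v))] /\
    [/\ opnorm_le ip D alpha^-1,
         opnorm_le ip (fun v => D (G v)) 1
       & opnorm_le ip (fun v => v - D (G v)) 1].
Proof.
exact: (core Hip HGbdd.1 HGsa HGpos Halpha Hcomplete).
Qed.
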